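(* A slice function $f\in\mathcal{S}(\Omega)$ admits a multiplicative inverse $f^{-\bullet}$ in the algebra $\mathcal{S}(\Omega)$ (with respect to the slice product) if, and only if, $f^c$ does. If this is the case, then $(f^c)^{-\bullet}=(f^{-\bullet})^c$. Furthermore, $f$ admits a multiplicative inverse $f^{-\bullet}$ if, and only if, both $N(f)$ and $N(f^c)$ do. If this is the case, then \[f^{-\bullet}=f^c\cdot N(f)^{-\bullet}=N(f^c)^{-\bullet}\cdot f^c.\] Moreover, $N(f)^{-\bullet}=(f^{-\bullet})^c\cdot f^{-\bullet}=N((f^{-\bullet})^c)$.
   Context: Let $A$ be a finite-dimensional real algebra with unit $1$ ($\mathbb{R}$ identified with $\mathbb{R}1$) which is alternative (the associator $(x,y,z)=(xy)z-x(yz)$ is alternating), with a $^*$-involution $x\mapsto x^c$ (real linear, $(x^c)^c=x$, $(xy)^c=y^cx^c$, $r^c=r$ for $r\in\mathbb{R}$). Let $t(x)=x+x^c$, $n(x)=xx^c$, $\mathbb{S}_A=\{J\in A:t(J)=0,n(J)=1\}$ (assumed non-empty), $Q_A=\mathbb{R}\cup\{x\in A:t(x),n(x)\in\mathbb{R},\ 4n(x)>t(x)^2\}$; every $x\in Q_A$ is $\alpha+\beta J$ with $\alpha,\beta\in\mathbb{R}$, $J\in\mathbb{S}_A$. Let $D\subseteq\mathbb{C}$ be non-empty and invariant under complex conjugation and $\Omega=\{\alpha+\beta J:\alpha+i\beta\in D,\ J\in\mathbb{S}_A\}$. Let $A_{\mathbb{C}}=\{a+\imath b:a,b\in A\}$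 with product $(a+\imath b)(a'+\imath b')=aa'-bb'+\imath(ab'+ba')$, conjugation $\overline{a+\imath b}=a-\imath b$ and involution $(a+\imath b)^c=a^c+\imath b^c$. A stem function is $F=F_1+\imath F_2:D\to A_{\mathbb{C}}$ with $F(\bar z)=\overline{F(z)}$; it induces the slice function $f=\mathcal{I}(F):\Omega\to A$, $f(\alpha+\beta J)=F_1(\alpha+i\beta)+JF_2(\alpha+i\beta)$ (each slice function is induced by a unique stem function). $\mathcal{S}(\Omega)$ is the set of slice functions on $\Omega$, with pointwise sum, slice product $f\cdot g=\mathcal{I}(FG)$ (pointwise product of the stem functions in $A_{\mathbb{C}}$), conjugate $f^c=\mathcal{I}(F^c)$ where $F^c(z)=F(z)^c$, and normal function $N(f)=f\cdot f^c$; with these operations $\mathcal{S}(\Omega)$ is a real alternative $^*$-algebra with unit the constant $1$. $h^{-\bullet}$ denotes the two-sided multiplicative inverse of $h$ in $\mathcal{S}(\Omega)$. *)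

(* Defs.v *)
(* The (non-associative) product,
   unit and involution of A are explicit operations with their axioms. *)
From HB Require Import structures.
From mathcomp Require Import all_boot all_order all_algebra.
From mathcomp Require Import reals.
From Stdlib Require Import ClassicalEpsilon.
Set Implicit Arguments. Unset Strict Implicit. Unset Printing Implicit Defensive.
Import Order.TTheory GRing.Theory Num.Theory.
Local Open Scope ring_scope.

Section SliceDefs.
Variables (R : realType) (A : vectType R).
Variables (mul : A -> A -> A) (u : A) (cj : A -> A).

Definition assoc (x y z : A) : A := mul (mul x y) z - mul x (mul y z).

(* A is a unital real alternative algebra with a *-involution;
   the reals are identified with R u (r |-> r *: u). *)
Record alt_star_alg : Prop := {
  mul_linl : forall (r : R) (x y z : A), mul (r *: x + y) z = r *: mul x z + mul y z;
  mul_linr : forall (r : R) (x y z : A), mul x (r *: y + z) = r *: mul x y + mul x z;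
  mul1x : forall x, mul u x = x;
  mulx1 : forall x, mul x u = x;
  assoc_alt1 : forall x y, assoc x x y = 0;
  assoc_alt2 : forall x y, assoc x y x = 0;
  assoc_alt3 : forall x y, assoc y x x = 0;
  cj_lin : forall (r : R) (x y : A), cj (r *: x + y) = r *: cj x + cj y;
  cjK : forall x, cj (cj x) = x;
  cj_mul : forall x y, cj (mul x y) = mul (cj y) (cj x);
  cj_real : forall r : R, cj (r *: u) = r *: u
}.

Definition tr (x : A) : A := x + cj x.
Definition nrm (x : A) : A := mul x (cj x).

Definition sphereA (J : A) : Prop := tr J = 0 /\ nrm J = u.

(* D ⊆ C is represented as a predicate on pairs (alpha, beta) ~ alpha + i beta *)
Variable D : R * R -> Prop.

Definition conj_inv : Prop := forall a b, D (a, b) -> D (a, - b).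

Definition Omega (x : A) : Prop :=
  exists a b J, D (a, b) /\ sphereA J /\ x = a *: u + b *: J.

(* A_C = A x A, (a,b) ~ a + i b *)
Definition cmul (p q : A * A) : A * A :=
  (mul p.1 q.1 - mul p.2 q.2, mul p.1 q.2 + mul p.2 q.1).
Definition cbar (p : A * A) : A * A := (p.1, - p.2).
Definition cinv (p : A * A) : A * A := (cj p.1, cj p.2).

Definition stem (F : R * R -> A * A) : Prop :=
  forall a b, D (a, b) -> F (a, - b) = cbar (F (a, b)).

Definition induces (F : R * R -> A * A) (f : A -> A) : Prop :=
  forall a b J, D (a, b) -> sphereA J ->
    f (a *: u + b *: J) = (F (a, b)).1 + mul J (F (a, b)).2.

Definition is_slice (f : A -> A) : Prop := exists F, stem F /\ induces F f.

Definition decomp (x : A) : R * R * A :=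
  epsilon (inhabits (0, 0, 0))
    (fun t => D (t.1.1, t.1.2) /\ sphereA t.2 /\ x = t.1.1 *: u + t.1.2 *: t.2).

Definition I (F : R * R -> A * A) : A -> A :=
  fun x => let t := decomp x in (F t.1).1 + mul t.2 (F t.1).2.

(* the (unique) stem function inducing a slice function *)
Definition stem_of (f : A -> A) : R * R -> A * A :=
  epsilon (inhabits (fun _ => (0, 0))) (fun F => stem F /\ induces F f).

Definition smul (f g : A -> A) : A -> A :=
  I (fun z => cmul (stem_of f z) (stem_of g z)).
Definition sconj (f : A -> A) : A -> A := I (fun z => cinv (stem_of f z)).
Definition N (f : A -> A) : A -> A := smul f (sconj f).
Definition sone : A -> A := fun _ => u.

Definition eqO (f g : A -> A) : Prop := forall x, Omega x -> f x = g x.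

Definition is_sinv (h g : A -> A) : Prop :=
  is_slice g /\ eqO (smul h g) sone /\ eqO (smul g h) sone.
Definition sinvertible (h : A -> A) : Prop := exists g, is_sinv h g.

End SliceDefs.

(* Main.v *)
Require Import Defs.
From mathcomp Require Import all_boot all_order all_algebra.
From mathcomp Require Import reals.
From HB Require Import structures.
From mathcomp Require Import ring lra.
From Stdlib Require Import ClassicalEpsilon.
Set Implicit Arguments. Unset Strict Implicit. Unset Printing Implicit Defensive.
Import Order.TTheory GRing.Theory Num.Theory.
Local Open Scope ring_scope.

Definition te (V : zmodType) : Type := (int * V)%type.
HB.instance Definition _ (V : zmodType) := GRing.Zmodule.on (te V).

Section TE.
Variable V : zmodType.
Definition te1 : te V := (1, 0).
Definition temul (p q : te V) : te V := (p.1 * q.1, p.2 *~ q.1 + q.2 *~ p.1).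
Lemma temulA : associative temul.
Proof. move=> [a x] [b y] [c z]; rewrite /temul /=; congr (_, _); first by rewrite mulrA.
rewrite !mulrzDl -!mulrzA !addrA (mulrC c a) (mulrC b a) //. Qed.
Lemma temulC : commutative temul.
Proof. move=> [a x] [b y]; rewrite /temul /= mulrC addrC //. Qed.
Lemma temul1 : left_id te1 temul.
Proof. move=> [a x]; rewrite /temul /= mul1r mul0rz add0r mulr1z //. Qed.
Lemma temulDl : left_distributive temul +%R.
Proof. move=> [a x] [b y] [c z]; rewrite /temul /=; congr (_, _); first by rewrite mulrDl.
rewrite mulrzDl mulrzDr !addrA; congr (_ + _); rewrite -!addrA; congr (_ + _); rewrite addrC //. Qed.
Lemma te1_neq0 : te1 != 0.
Proof. by rewrite /te1; apply/eqP => -[]. Qed.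
HB.instance Definition _ := GRing.Zmodule_isComNzRing.Build (te V) temulA temulC temul1 temulDl te1_neq0.
Definition emb (v : V) : te V := (0, v).
Lemma embD x y : emb (x + y) = emb x + emb y. Proof. by rewrite /emb; congr (_,_); rewrite addr0. Qed.
Lemma embN x : emb (- x) = - emb x. Proof. by rewrite /emb; congr (_,_); rewrite oppr0. Qed.
Lemma emb0 : emb 0 = 0. Proof. by []. Qed.
Lemma emb_inj x y : emb x = emb y -> x = y. Proof. by case. Qed.
End TE.

Ltac zsolve := apply: emb_inj; rewrite ?(embD, embN, emb0); ring.

Section Alt.
Variables (V : zmodType) (m : V -> V -> V) (e : V).
Definition asc (x y z : V) : V := m (m x y) z - m x (m y z).
Hypothesis mDl : forall x y z, m (x + y) z = m x z + m y z.
Hypothesis mDr : forall x y z, m x (y + z) = m x y + m x z.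
Hypothesis m1x : forall x, m e x = x.
Hypothesis mx1 : forall x, m x e = x.
Hypothesis alt1 : forall x y, asc x x y = 0.
Hypothesis alt2 : forall x y, asc x y x = 0.
Hypothesis alt3 : forall x y, asc y x x = 0.
Hypothesis tf : forall v : V, v + v = 0 -> v = 0.

Lemma m0l x : m 0 x = 0.
Proof. by apply: (addrI (m 0 x)); rewrite addr0 -mDl addr0. Qed.
Lemma m0r x : m x 0 = 0.
Proof. by apply: (addrI (m x 0)); rewrite addr0 -mDr addr0. Qed.
Lemma mNl x y : m (- x) y = - m x y.
Proof. by apply: (addrI (m x y)); rewrite -mDl !subrr m0l. Qed.
Lemma mNr x y : m x (- y) = - m x y.
Proof. by apply: (addrI (m x y)); rewrite -mDr !subrr m0r. Qed.

Ltac msolve := rewrite /asc ?(mDl, mDr, mNl, mNr, m0l, m0r); zsolve.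

Lemma s12 x y z : asc x y z + asc y x z = 0.
Proof.
have H := alt1 (x + y) z.
have -> : asc x y z + asc y x z = asc (x + y) (x + y) z - asc x x z - asc y y z by msolve.
by rewrite H alt1 alt1 !subr0.
Qed.
Lemma s23 x y z : asc x y z + asc x z y = 0.
Proof.
have -> : asc x y z + asc x z y = asc x (y + z) (y + z) - asc x y y - asc x z z by msolve.
by rewrite !alt3 !subr0.
Qed.

Lemma K2 x y z : asc x y (m x z) = m (asc x y z) x.
Proof.
apply/eqP; rewrite -subr_eq0; apply/eqP.
apply: tf.
have -> : (asc x y (m x z) - m (asc x y z) x) + (asc x y (m x z) - m (asc x y z) x) = (- ((asc (m z x) y x + asc y (m z x) x) + (asc (m z x) y x + asc y (m z x) x) + (asc (m z x) y x + asc y (m z x) x) + (asc (m z x) y x + asc y (m z x) x))) + ((asc (m z x) y x + asc (m z x) x y) + (asc (m z x) y x + asc (m z x) x y) + (asc (m z x) y x + asc (m z x) x y) + (asc (m z x) y x + asc (m z x) x y)) + (- ((asc (m x z) y x + asc y (m x z) x) + (asc (m x z) y x + asc y (m x z) x))) + ((asc (m x z) y x + asc (m x z) x y) + (asc (m x z) y x + asc (m x z) x y)) + ((asc z x (m y x) + asc x z (m y x)) + (asc z x (m y x) + asc x z (m y x)) + (asc z x (m y x) + asc x z (m y x)) + (asc z x (m y x) + asc x z (m y x))) + (- ((asc z x (m y x) + asc z (m y x) x) + (asc z x (m y x) + asc z (m y x) x) + (asc z x (m y x) + asc z (m y x) x) + (asc z x (m y x) + asc z (m y x) x))) + ((asc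 z x (m x y) + asc x z (m x y)) + (asc z x (m x y) + asc x z (m x y)) + (asc z x (m x y) + asc x z (m x y)) + (asc z x (m x y) + asc x z (m x y))) + (- ((asc (m x x) z y + asc z (m x x) y) + (asc (m x x) z y + asc z (m x x) y) + (asc (m x x) z y + asc z (m x x) y) + (asc (m x x) z y + asc z (m x x) y) + (asc (m x x) z y + asc z (m x x) y) + (asc (m x x) z y + asc z (m x x) y) + (asc (m x x) z y + asc z (m x x) y) + (asc (m x x) z y + asc z (m x x) y))) + ((asc (m x x) z y + asc (m x x) y z) + (asc (m x x) z y + asc (m x x) y z) + (asc (m x x) z y + asc (m x x) y z) + (asc (m x x) z y + asc (m x x) y z) + (asc (m x x) z y + asc (m x x) y z) + (asc (m x x) z y + asc (m x x) y z) + (asc (m x x) z y + asc (m x x) y z) + (asc (m x x) z y + asc (m x x) y z)) + (- ((asc x y (m z x) + asc x (m z x) y) + (asc x y (m z x) + asc x (m z x) y))) + ((asc x y (m x z) + asc y x (m x z)) + (asc x y (m x z) + asc y x (m x z))) + ((asc z (m x x) y + asc z y (m x x)) + (asc z (m x x) y + asc z y (m x x)) + (asc z (m x x) y + asc z y (m x x)) + (asc z (m x x) y + asc z y (m x x))) + (- ((asc y (m x x) z + asc (m x x) y z) + (asc y (m x x) z + asc (m x x) y z) + (asc y (m x x) z + asc (m x x) y z) + (asc y (m x x) z + asc (m x x) y z) + (asc y (m x x) z + asc (m x x) y z) + (asc y (m x x) z + asc (m x x) y z) + (asc y (m x x) z + asc (m x x) y z) + (asc y (m x x) z + asc (m x x)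 y z))) + ((asc y (m x x) z + asc y z (m x x)) + (asc y (m x x) z + asc y z (m x x)) + (asc y (m x x) z + asc y z (m x x)) + (asc y (m x x) z + asc y z (m x x))) + ((asc x (m y x) z + asc (m y x) x z) + (asc x (m y x) z + asc (m y x) x z) + (asc x (m y x) z + asc (m y x) x z) + (asc x (m y x) z + asc (m y x) x z)) + (- ((asc x (m y x) z + asc x z (m y x)) + (asc x (m y x) z + asc x z (m y x)) + (asc x (m y x) z + asc x z (m y x)) + (asc x (m y x) z + asc x z (m y x)))) + ((asc x (m x y) z + asc (m x y) x z) + (asc x (m x y) z + asc (m x y) x z)) + (- ((asc x (m x y) z + asc x z (m x y)) + (asc x (m x y) z + asc x z (m x y)))) + (- ((asc (m x y) x z + asc (m x y) z x) + (asc (m x y) x z + asc (m x y) z x))) + ((asc (m z y) x x + asc (m z y) x x) + (asc (m z y) x x + asc (m z y) x x)) + ((asc (m y z) x x + asc x (m y z) x) + (asc (m y z) x x + asc x (m y z) x)) + ((asc (m y z) x x + asc (m y z) x x)) + ((asc y (m x z) x + asc y x (m x z)) + (asc y (m x z) x + asc y x (m x z))) + (- ((m (asc z x x + asc x z x) y) + (m (asc z x x + asc x z x) y))) + (- ((m (asc z x x + asc z x x) y))) + (- ((m y (asc z x x + asc z x x)) + (m y (asc z x x + asc z x x)))) + (- ((m y (asc x x z + asc x x z)) + (m y (asc x x z + asc x x z)))) + (- ((m (asc x y x + asc y x x) z) + (m (asc x y x + asc y x x) z) + (m (asc x y x + asc y x x) z) + (m (asc x y x + asc y x x) z))) + (-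 ((m z (asc x y x + asc y x x)) + (m z (asc x y x + asc y x x)) + (m z (asc x y x + asc y x x)) + (m z (asc x y x + asc y x x)))) + (- ((m z (asc x y x + asc x x y)) + (m z (asc x y x + asc x x y)) + (m z (asc x y x + asc x x y)) + (m z (asc x y x + asc x x y)))) + ((m (asc x y x) z) + (m (asc x y x) z) + (m (asc x y x) z) + (m (asc x y x) z)) + ((m z (asc x y x)) + (m z (asc x y x)) + (m z (asc x y x)) + (m z (asc x y x)) + (m z (asc x y x)) + (m z (asc x y x)) + (m z (asc x y x)) + (m z (asc x y x))) + (- ((m (asc z y x + asc y z x) x) + (m (asc z y x + asc y z x) x) + (m (asc z y x + asc y z x) x) + (m (asc z y x + asc y z x) x))) + ((m x (asc z y x + asc y z x)) + (m x (asc z y x + asc y z x))) + (- ((m x (asc z y x + asc z x y)) + (m x (asc z y x + asc z x y)))) by msolve.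
rewrite ?(s12 (m z x) y x) ?(s23 (m z x) y x) ?(s12 (m x z) y x) ?(s23 (m x z) y x) ?(s12 z x (m y x)) ?(s23 z x (m y x)) ?(s12 z x (m x y)) ?(s12 (m x x) z y) ?(s23 (m x x) z y) ?(s23 x y (m z x)) ?(s12 x y (m x z)) ?(s23 z (m x x) y) ?(s12 y (m x x) z) ?(s23 y (m x x) z) ?(s12 x (m y x) z) ?(s23 x (m y x) z) ?(s12 x (m x y) z) ?(s23 x (m x y) z) ?(s23 (m x y) x z) ?(s23 (m z y) x x) ?(s12 (m y z) x x) ?(s23 (m y z) x x) ?(s23 y (m x z) x) ?(s12 z x x) ?(s23 z x x) ?(s12 x x z) ?(s12 x y x) ?(s23 x y x) ?(alt2 x y) ?(s12 z y x) ?(s23 z y x).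
by rewrite ?(m0l, m0r, oppr0, addr0).
Qed.
Lemma K4 x y z : asc x y (m z x) = m x (asc x y z).
Proof.
apply/eqP; rewrite -subr_eq0; apply/eqP.
apply: tf.
have -> : (asc x y (m z x) - m x (asc x y z)) + (asc x y (m z x) - m x (asc x y z)) = ((asc (m z x) y x + asc y (m z x) x) + (asc (m z x) y x + asc y (m z x) x)) + (- ((asc (m z x) y x + asc (m z x) x y) + (asc (m z x) y x + asc (m z x) x y))) + (- ((asc z x (m x y) + asc x z (m x y)) + (asc z x (m x y) + asc x z (m x y)))) + ((asc (m x x) z y + asc z (m x x) y) + (asc (m x x) z y + asc z (m x x) y)) + (- ((asc (m x x) z y + asc (m x x) y z) + (asc (m x x) z y + asc (m x x) y z))) + ((asc x y (m z x) + asc y x (m z x)) + (asc x y (m z x) + asc y x (m z x))) + ((asc x (m x y) z + asc x z (m x y)) + (asc x (m x y) z + asc x z (m x y))) + (- ((asc x x (m y z) + asc x x (m y z)))) + (- ((asc y (m z x) x + asc y x (m z x)) + (asc y (m z x) x + asc y x (m z x)))) + ((m (asc z x x + asc z x x) y)) + ((m (asc x y x + asc x x y) z) + (m (asc x y x + asc x x y) z)) + ((m z (asc x y x + asc x x y)) + (m z (asc x y x + asc x x y))) + (- ((m (asc x y x) z) + (m (asc x y x) z))) + (- ((m z (asc x y x)) + (m z (asc x y x)))) by msolve.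
rewrite ?(s12 (m z x) y x) ?(s23 (m z x) y x) ?(s12 z x (m x y)) ?(s12 (m x x) z y) ?(s23 (m x x) z y) ?(s12 x y (m z x)) ?(s23 x (m x y) z) ?(s12 x x (m y z)) ?(s23 y (m z x) x) ?(s23 z x x) ?(s23 x y x) ?(alt2 x y).
by rewrite ?(m0l, m0r, oppr0, addr0).
Qed.

Lemma ascD3 x y u v : asc x y (u + v) = asc x y u + asc x y v.
Proof. msolve. Qed.
Lemma ascN3 x y u : asc x y (- u) = - asc x y u.
Proof. msolve. Qed.
Lemma asc0_3 x y : asc x y 0 = 0.
Proof. msolve. Qed.
Lemma ascl0 y z : asc 0 y z = 0.
Proof. msolve. Qed.
Lemma asc_e3 x y : asc x y e = 0.
Proof. by rewrite /asc !mx1 subrr. Qed.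
Lemma asc_e1 x y : asc e x y = 0.
Proof. by rewrite /asc !m1x subrr. Qed.
Lemma sw12 x y z : asc y x z = - asc x y z.
Proof. by apply/eqP; rewrite -subr_eq0 opprK addrC s12. Qed.
Lemma sw23 x y z : asc x z y = - asc x y z.
Proof. by apply/eqP; rewrite -subr_eq0 opprK addrC s23. Qed.
Lemma cyc x y z : asc z x y = asc x y z.
Proof. by rewrite sw12 sw23 opprK. Qed.
Lemma K7 x y z : asc (m x y) x z = - m (asc x y z) x.
Proof. by rewrite sw12 -sw23 K2 sw23 mNl. Qed.
Lemma K2b x y z : asc y x (m x z) = m (asc y x z) x.
Proof. by rewrite [LHS]sw12 K2 [in RHS]sw12 mNl. Qed.
Lemma K4b x y z : asc y x (m z x) = m x (asc y x z).
Proof. by rewrite [LHS]sw12 K4 [in RHS]sw12 mNr. Qed.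

Lemma inv_asc p q : m p q = e -> m q p = e -> forall z, asc p q z = 0.
Proof.
move=> pq qp.
have h1 z : m (asc p q z) p = 0.
  by apply/eqP; rewrite -oppr_eq0 -K7 pq asc_e1.
move=> z; set w := asc p q z.
have hw1 : asc p q w = - w.
  by rewrite -cyc /asc h1 m0l pq mx1 sub0r.
have hw2 : asc w q p = w.
  by rewrite cyc sw12 hw1 opprK.
have hw3 : m (m w q) p = 0 by rewrite /w -K2b h1.
apply: tf.
have : m w (m q p) = m (m w q) p - asc w q p by rewrite /asc opprB addrC subrK.
by rewrite qp mx1 hw3 hw2 sub0r => {1}->; rewrite addNr.
Qed.

Lemma invL p q z : m p q = e -> m q p = e -> m p (m q z) = z.
Proof.
move=> pq qp; have := inv_asc pq qp z; rewrite /asc pq m1x => /eqP.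
by rewrite subr_eq0 => /eqP <-.
Qed.
Lemma invR p q z : m p q = e -> m q p = e -> m (m z p) q = z.
Proof.
move=> pq qp; have := inv_asc pq qp z; rewrite -cyc /asc pq mx1 => /eqP.
by rewrite subr_eq0 => /eqP.
Qed.
Lemma inv_uniq p q r : m p q = e -> m q p = e -> m p r = e -> r = q.
Proof. by move=> pq qp pr; rewrite -(invL r qp pq) pr mx1. Qed.

Lemma inv_prod p p' r r' : m p p' = e -> m p' p = e -> m r r' = e -> m r' r = e ->
  m (m p r) (m r' p') = e.
Proof.
move=> h1 h2 h3 h4.
pose E z := asc p r z.
have Er' z : E (m r' z) = m (E z) r'.
  have -> : E z = m (E (m r' z)) r by rewrite /E -K2b (invL _ h3 h4).
  by rewrite (invR _ h3 h4).
have Ep' z : E (m z p') = m p' (E z).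
  have -> : E z = m p (E (m z p')) by rewrite /E -K4 (invR _ h2 h1).
  by rewrite (invL _ h2 h1).
have E0 : E (m r' p') = 0.
  by rewrite Er' -(m1x p') Ep' /E asc_e3 m0r m0l.
have : asc p r (m r' p') = 0 by [].
by rewrite /asc (invL _ h3 h4) => /eqP; rewrite subr_eq0 h1 => /eqP <-.
Qed.

Lemma inv_N a b n1 n2 :
  m (m a b) n1 = e -> m n1 (m a b) = e -> m (m b a) n2 = e -> m n2 (m b a) = e ->
  [/\ m a (m b n1) = e, m (m b n1) a = e & m n2 b = m b n1].
Proof.
move=> h1 h2 h3 h4.
pose E z := asc a b z.
have Ea z : E (m a z) = m (E z) a by rewrite /E K2.
have Eb z : E (m b z) = m (E z) b by rewrite /E K2b.
have e1 z : m (m a b) z = m a (m b z) + E z by rewrite /E /asc addrC subrK.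
have e2 z : m (m b a) z = m b (m a z) - E z by rewrite /E -sw12 /asc addrC subrK.
have ED x y : E (x + y) = E x + E y by rewrite /E ascD3.
have EN x : E (- x) = - E x by rewrite /E ascN3.
have w1 : E n1 = 0.
  have H : E (m (m a b) n1) = 0 by rewrite h1 /E asc_e3.
  rewrite e1 ED Ea Eb in H.
  have H2 : m (m (E n1) b) a = m (E n1) (m b a) - E (E n1).
    by set w := E n1; rewrite /E -sw12 -cyc /asc addrC subrK.
  rewrite H2 subrK in H.
  by rewrite -(invR (E n1) h3 h4) H m0l.
have w2 : E n2 = 0.
  have H : E (m (m b a) n2) = 0 by rewrite h3 /E asc_e3.
  rewrite e2 ED EN Eb Ea in H.
  have H2 : m (m (E n2) a) b = m (E n2) (m a b) + E (E n2).
    by set w := E n2; rewrite /E -cyc /asc addrC subrK.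
  rewrite H2 addrK in H.
  by rewrite -(invR (E n2) h1 h2) H m0l.
have r1 : m a (m b n1) = e by rewrite -h1 e1 w1 addr0.
have l1 : m (m n2 b) a = e.
  have : asc n2 b a = 0 by rewrite cyc sw12 (w2 : asc a b n2 = 0) oppr0.
  by rewrite /asc h4 => /eqP; rewrite subr_eq0 => /eqP.
have bb : m (m b a) (m b n1) = b.
  have : asc b a (m b n1) = 0 by rewrite sw12 (Eb n1 : asc a b (m b n1) = _) w1 m0l oppr0.
  by rewrite /asc r1 mx1 => /eqP; rewrite subr_eq0 => /eqP.
have lr : m n2 b = m b n1.
  have H := inv_asc h4 h3 (m b n1).
  by move: H; rewrite /asc h4 m1x bb => /eqP; rewrite subr_eq0 => /eqP.
by split => //; rewrite -lr.
Qed.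

End Alt.

Section Slice.
Variables (R : realType) (A : vectType R) (mul : A -> A -> A) (u : A) (cj : A -> A) (D : R * R -> Prop).
Hypothesis HA : alt_star_alg mul u cj.

Lemma mADl x y z : mul (x + y) z = mul x z + mul y z.
Proof. by have := mul_linl HA 1 x y z; rewrite !scale1r. Qed.
Lemma mADr x y z : mul x (y + z) = mul x y + mul x z.
Proof. by have := mul_linr HA 1 x y z; rewrite !scale1r. Qed.
Lemma mA0l x : mul 0 x = 0. Proof. exact: m0l mADl x. Qed.
Lemma mA0r x : mul x 0 = 0. Proof. exact: m0r mADr x. Qed.
Lemma mANl x y : mul (- x) y = - mul x y. Proof. exact: mNl mADl x y. Qed.
Lemma mANr x y : mul x (- y) = - mul x y. Proof. exact: mNr mADr x y. Qed.
Lemma mAZl r x z : mul (r *: x) z = r *: mul x z.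
Proof. by have := mul_linl HA r x 0 z; rewrite !addr0 mA0l addr0. Qed.
Lemma mAZr r x z : mul x (r *: z) = r *: mul x z.
Proof. by have := mul_linr HA r x z 0; rewrite !addr0 mA0r addr0. Qed.
Lemma cjD x y : cj (x + y) = cj x + cj y.
Proof. by have := cj_lin HA 1 x y; rewrite !scale1r. Qed.
Lemma cj0 : cj 0 = 0.
Proof. by apply: (addrI (cj 0)); rewrite -cjD !addr0. Qed.
Lemma cjN x : cj (- x) = - cj x.
Proof. by apply: (addrI (cj x)); rewrite -cjD !subrr cj0. Qed.
Lemma cjZ r x : cj (r *: x) = r *: cj x.
Proof. by have := cj_lin HA r x 0; rewrite !addr0 cj0 addr0. Qed.
Lemma cju : cj u = u.
Proof. by have := cj_real HA 1; rewrite !scale1r. Qed.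
Lemma tfA (v : A) : v + v = 0 -> v = 0.
Proof.
move=> h; have h2 : (2 : R) *: v = 0 by rewrite scaler_nat mulr2n.
have nz : (2 : R) != 0 by rewrite pnatr_eq0.
by rewrite -[v]scale1r -(mulVf nz) -scalerA h2 scaler0.
Qed.
Lemma alt1A x y : asc mul x x y = 0. Proof. exact: (assoc_alt1 HA x y). Qed.
Lemma alt2A x y : asc mul x y x = 0. Proof. exact: (assoc_alt2 HA x y). Qed.
Lemma alt3A x y : asc mul y x x = 0. Proof. exact: (assoc_alt3 HA x y). Qed.
Lemma s12A x y z : asc mul x y z + asc mul y x z = 0. Proof. exact: s12 mADl mADr alt1A x y z. Qed.
Lemma s23A x y z : asc mul x y z + asc mul x z y = 0. Proof. exact: s23 mADl mADr alt3A x y z. Qed.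

Definition B : zmodType := (A * A)%type.
Definition m : B -> B -> B := cmul mul.
Definition e : B := (u, 0).

Lemma pairE (p q : B) : p.1 = q.1 -> p.2 = q.2 -> p = q.
Proof. by case: p q => [? ?] [? ?] /= -> ->. Qed.

Lemma mBDl x y z : m (x + y) z = m x z + m y z.
Proof. apply: pairE; rewrite /m /cmul /= !mADl; zsolve. Qed.
Lemma mBDr x y z : m x (y + z) = m x y + m x z.
Proof. apply: pairE; rewrite /m /cmul /= !mADr; zsolve. Qed.
Lemma mB1x x : m e x = x.
Proof. apply: pairE; rewrite /m /e /cmul /= (mul1x HA) !mA0l; zsolve. Qed.
Lemma mBx1 x : m x e = x.
Proof. apply: pairE; rewrite /m /e /cmul /= (mulx1 HA) !mA0r; zsolve. Qed.

Lemma ascB p q r : asc m p q r =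
  (asc mul p.1 q.1 r.1 - asc mul p.1 q.2 r.2 - asc mul p.2 q.1 r.2 - asc mul p.2 q.2 r.1,
   asc mul p.1 q.1 r.2 + asc mul p.1 q.2 r.1 + asc mul p.2 q.1 r.1 - asc mul p.2 q.2 r.2).
Proof. apply: pairE; rewrite /asc /m /cmul /= ?(mADl, mADr, mANl, mANr); zsolve. Qed.

Lemma zl1 (V : zmodType) (a d : V) : a = 0 -> d = a -> d = 0.
Proof. by move=> -> ->. Qed.
Lemma zlN (V : zmodType) (a d : V) : a = 0 -> d = - a -> d = 0.
Proof. by move=> -> ->; rewrite oppr0. Qed.
Lemma zl2 (V : zmodType) (a b d : V) : a = 0 -> b = 0 -> d = a + b -> d = 0.
Proof. by move=> -> -> ->; rewrite addr0. Qed.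
Lemma zl2N (V : zmodType) (a b d : V) : a = 0 -> b = 0 -> d = - (a + b) -> d = 0.
Proof. by move=> -> -> ->; rewrite addr0 oppr0. Qed.
Lemma zl3 (V : zmodType) (a b c d : V) : a = 0 -> b = 0 -> c = 0 -> d = a - b - c -> d = 0.
Proof. by move=> -> -> -> ->; rewrite !subr0. Qed.

Lemma s13A x y z : asc mul x y z + asc mul z y x = 0.
Proof.
apply: (zl3 (alt2A (x + z) y) (alt2A x y) (alt2A z y)).
rewrite /asc ?(mADl, mADr); zsolve.
Qed.

Lemma alt1B x y : asc m x x y = 0.
Proof.
rewrite ascB; apply: pairE => /=; rewrite !alt1A.
  by apply: (zlN (s12A x.1 x.2 y.2)); zsolve.
by apply: (zl1 (s12A x.1 x.2 y.1)); zsolve.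
Qed.
Lemma alt2B x y : asc m x y x = 0.
Proof.
rewrite ascB; apply: pairE => /=; rewrite !alt2A.
  by apply: (zlN (s13A x.1 y.2 x.2)); zsolve.
by apply: (zl1 (s13A x.1 y.1 x.2)); zsolve.
Qed.
Lemma alt3B x y : asc m y x x = 0.
Proof.
rewrite ascB; apply: pairE => /=; rewrite !alt3A.
  by apply: (zlN (s23A y.2 x.1 x.2)); zsolve.
by apply: (zl1 (s23A y.1 x.1 x.2)); zsolve.
Qed.
Lemma tfB (v : B) : v + v = 0 -> v = 0.
Proof. by case: v => [a b] [] /tfA -> /tfA ->. Qed.

Definition ci : B -> B := cinv cj.
Lemma ci_mul p q : ci (m p q) = m (ci q) (ci p).
Proof. apply: pairE; rewrite /ci /cinv /m /cmul /= ?(cjD, cjN, (cj_mul HA)); zsolve. Qed.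
Lemma ci_ci p : ci (ci p) = p.
Proof. by case: p => a b; rewrite /ci /cinv /= !(cjK HA). Qed.
Lemma ci_e : ci e = e.
Proof. by rewrite /ci /cinv /e /= cju cj0. Qed.
Lemma ci_inv p q : m p q = e -> m (ci q) (ci p) = e.
Proof. by move=> h; rewrite -ci_mul h ci_e. Qed.

Definition invB_N := inv_N mBDl mBDr mB1x mBx1 alt1B alt2B alt3B tfB.
Definition invB_prod := inv_prod mBDl mBDr mB1x mBx1 alt1B alt2B alt3B tfB.
Definition invB_uniq := inv_uniq mBDl mBDr mB1x mBx1 alt1B alt2B alt3B tfB.

Hypothesis HS : exists J, sphereA mul u cj J.
Hypothesis HDc : conj_inv D.

Notation sph := (sphereA mul u cj).

Lemma cjJ J : sph J -> cj J = - J.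
Proof. by case=> h _; apply/eqP; rewrite -subr_eq0 opprK addrC; apply/eqP. Qed.
Lemma JJ J : sph J -> mul J J = - u.
Proof. by move=> sJ; case: (sJ) => _; rewrite /nrm cjJ // mANr => <-; rewrite opprK. Qed.
Lemma JJx J x : sph J -> mul J (mul J x) = - x.
Proof.
move=> sJ; have := alt1A J x; rewrite /asc JJ // mANl (mul1x HA) => /eqP.
by rewrite subr_eq0 => /eqP <-.
Qed.
Lemma sphN J : sph J -> sph (- J).
Proof.
move=> sJ; split.
  by rewrite /tr cjN cjJ // opprK addrC subrr.
by rewrite /nrm cjN cjJ // opprK mANl JJ // opprK.
Qed.

Lemma trE a b J : sph J -> Defs.tr cj (a *: u + b *: J) = (a + a) *: u.
Proof. move=> sJ; rewrite /tr cjD !cjZ cju cjJ // scalerN scalerDl; zsolve. Qed.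

Lemma scal_inj (c c' : R) : u != 0 -> c *: u = c' *: u -> c = c'.
Proof.
move=> un0 h; apply/eqP; rewrite -subr_eq0.
have : (c - c') *: u == 0 by rewrite scalerBl h subrr.
by rewrite scaler_eq0 (negbTE un0) orbF.
Qed.

Lemma rep_eq (F : R * R -> A * A) a b J a' b' J' :
  stem D F -> D (a, b) -> sph J -> D (a', b') -> sph J' ->
  a *: u + b *: J = a' *: u + b' *: J' ->
  (F (a, b)).1 + mul J (F (a, b)).2 = (F (a', b')).1 + mul J' (F (a', b')).2.
Proof.
move=> sF Dab sJ Dab' sJ' E.
have [u0|un0] := eqVneq u 0.
  have z0 (x : A) : x = 0 by rewrite -(mul1x HA x) u0 mA0l.
  by rewrite [LHS]z0 [RHS]z0.
have aa : a = a'.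
  have := congr1 (Defs.tr cj) E; rewrite !trE // => /(scal_inj un0) h.
  lra.
subst a'.
have bJ : b *: J = b' *: J' by apply: (addrI (a *: u)).
have bb : b * b = b' * b'.
  have h : mul (b *: J) (b *: J) = mul (b' *: J') (b' *: J') by rewrite bJ.
  move: h; rewrite !mAZl !mAZr !JJ // !scalerN !scalerA => /oppr_inj.
  exact: scal_inj.
have [b0|bn0] := eqVneq b 0.
  subst b; have b0' : b' = 0.
    have /eqP : b' * b' = 0 by rewrite -bb mul0r.
    by rewrite mulf_eq0 orbb => /eqP.
  subst b'; have F0 : (F (a, 0)).2 = 0.
    have := sF a 0 Dab; rewrite oppr0 /cbar => /(congr1 snd) /= h.
    by apply: tfA; rewrite {1}h addNr.
  by rewrite F0 !mA0r.
have : (b - b') * (b + b') = 0.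
  have -> : (b - b') * (b + b') = b * b - b' * b' by ring.
  by rewrite bb subrr.
move/eqP; rewrite mulf_eq0 => /orP [] /eqP h.
  have eb : b' = b by apply/eqP; rewrite eq_sym -subr_eq0 h.
  subst b'; have -> : J' = J by apply: (scalerI bn0); rewrite bJ.
  by [].
have eb : b' = - b by apply/eqP; rewrite -addr_eq0 addrC h.
subst b'.
have -> : J' = - J.
  by apply: (scalerI bn0); rewrite scalerN bJ scaleNr opprK.
by rewrite sF // /cbar /= mANl mANr opprK.
Qed.

Lemma decompP x : Omega mul u cj D x ->
  D ((decomp mul u cj D x).1.1, (decomp mul u cj D x).1.2) /\ sph (decomp mul u cj D x).2 /\
  x = (decomp mul u cj D x).1.1 *: u + (decomp mul u cj D x).1.2 *: (decomp mul u cj D x).2.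
Proof.
move=> [a [b [J [Dab [sJ E]]]]].
apply: (epsilon_spec (inhabits (0, 0, 0)) (fun t : R * R * A => D (t.1.1, t.1.2) /\ sph t.2 /\ x = t.1.1 *: u + t.1.2 *: t.2)).
by exists ((a, b), J).
Qed.

Lemma ind_I F : stem D F -> induces mul u cj D F (I mul u cj D F).
Proof.
move=> sF a b J Dab sJ.
have Ox : Omega mul u cj D (a *: u + b *: J) by exists a, b, J.
have := decompP Ox; rewrite /I.
case: (decomp mul u cj D _) => [[a' b'] J'] /= [Da' [sJ' E]].
by apply: rep_eq.
Qed.

Lemma stem_uniq F G f : induces mul u cj D F f -> induces mul u cj D G f ->
  forall z, D z -> F z = G z.
Proof.
move=> IF IG [a b] Dab; have [J sJ] := HS.
have e1 := IF a b J Dab sJ; rewrite (IG a b J Dab sJ) in e1.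
have e2 := IF a b (- J) Dab (sphN sJ); rewrite (IG a b (- J) Dab (sphN sJ)) in e2.
set F1 := (F (a, b)).1 in e1 e2 *; set F2 := (F (a, b)).2 in e1 e2 *.
set G1 := (G (a, b)).1 in e1 e2 *; set G2 := (G (a, b)).2 in e1 e2 *.
have h1 : G1 + mul J G2 - (F1 + mul J F2) = 0 by rewrite e1 subrr.
have h2 : G1 + mul (- J) G2 - (F1 + mul (- J) F2) = 0 by rewrite e2 subrr.
have d1 : F1 - G1 = 0.
  apply: tfA; apply: (zl2N h1 h2); rewrite !mANl; zsolve.
have d2 : mul J (F2 - G2) = 0.
  apply: (zl2N h1 d1); rewrite mADr mANr; zsolve.
have d2' : F2 - G2 = 0.
  have := JJx (F2 - G2) sJ; rewrite d2 mA0r => /eqP.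
  by rewrite eq_sym oppr_eq0 => /eqP.
apply: pairE; apply/eqP; rewrite -subr_eq0; apply/eqP; [exact: d1 | exact: d2'].
Qed.


Notation SO := (stem_of mul u cj D).
Notation slice := (is_slice mul u cj D).

Lemma SOP f : slice f -> stem D (SO f) /\ induces mul u cj D (SO f) f.
Proof.
move=> hf; rewrite /stem_of.
exact: (epsilon_spec (inhabits (fun _ => (0, 0))) (fun F => stem D F /\ induces mul u cj D F f) hf).
Qed.

Lemma slice_I F : stem D F -> slice (I mul u cj D F).
Proof. by move=> sF; exists F; split => //; apply: ind_I. Qed.

Lemma SO_I F : stem D F -> forall z, D z -> SO (I mul u cj D F) z = F z.
Proof.
move=> sF z Dz; have [_ h] := SOP (slice_I sF).
exact: (stem_uniq h (ind_I sF)).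
Qed.

Lemma stem_m F G : stem D F -> stem D G -> stem D (fun z => cmul mul (F z) (G z)).
Proof.
move=> sF sG a b Dab; rewrite (sF a b Dab) (sG a b Dab).
apply: pairE; rewrite /cmul /cbar /= ?(mANl, mANr); zsolve.
Qed.
Lemma stem_ci F : stem D F -> stem D (fun z => cinv cj (F z)).
Proof. by move=> sF a b Dab; rewrite (sF a b Dab) /cinv /cbar /= cjN. Qed.

Definition sm := smul mul u cj D.
Definition sc := sconj mul u cj D.

Lemma slice_sm f g : slice f -> slice g -> slice (sm f g).
Proof. by move=> /SOP [sf _] /SOP [sg _]; apply: slice_I; apply: stem_m. Qed.
Lemma slice_sc f : slice f -> slice (sc f).
Proof. by move=> /SOP [sf _]; apply: slice_I; apply: stem_ci. Qed.
Lemma SO_sm f g : slice f -> slice g -> forall z, D z -> SO (sm f g) z = m (SO f z) (SO g z).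
Proof. by move=> /SOP [sf _] /SOP [sg _] z Dz; rewrite /sm /smul SO_I //; apply: stem_m. Qed.
Lemma SO_sc f : slice f -> forall z, D z -> SO (sc f) z = ci (SO f z).
Proof. by move=> /SOP [sf _] z Dz; rewrite /sc /sconj SO_I //; apply: stem_ci. Qed.

Lemma ind_one : induces mul u cj D (fun _ => e) (sone u).
Proof. by move=> a b J _ _; rewrite /sone /e /= mA0r addr0. Qed.
Lemma stem_one : stem D (fun _ => e).
Proof. by move=> a b _; rewrite /e /cbar /= oppr0. Qed.
Lemma SO_one z : D z -> SO (sone u) z = e.
Proof.
move=> Dz; have [_ h] := SOP (ex_intro _ _ (conj stem_one ind_one)).
exact: (stem_uniq h ind_one).
Qed.

Lemma eqOP f g : slice f -> slice g ->
  (eqO mul u cj D f g <-> forall z, D z -> SO f z = SO g z).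
Proof.
move=> hf hg; have [sf If] := SOP hf; have [sg Ig] := SOP hg; split.
  move=> E; apply: stem_uniq If _ => a b J Dab sJ.
  rewrite E; first exact: Ig.
  by exists a, b, J.
move=> E x [a [b [J [Dab [sJ ->]]]]].
by rewrite (If a b J Dab sJ) (Ig a b J Dab sJ) E.
Qed.

Lemma sinvP h g : slice h ->
  (is_sinv mul u cj D h g <-> slice g /\
     forall z, D z -> m (SO h z) (SO g z) = e /\ m (SO g z) (SO h z) = e).
Proof.
move=> hh; have sone_s : slice (sone u) by exists (fun _ => e); split; [exact: stem_one | exact: ind_one].
split.
  move=> [hg [E1 E2]]; split => // z Dz.
  move/(eqOP (slice_sm hh hg) sone_s): E1 => E1.
  move/(eqOP (slice_sm hg hh) sone_s): E2 => E2.
  by rewrite -(SO_sm hh hg Dz) -(SO_sm hg hh Dz) E1 // E2 // SO_one.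
move=> [hg E]; split => //; split.
  by apply/(eqOP (slice_sm hh hg) sone_s) => z Dz; rewrite SO_sm // SO_one //; case: (E z Dz).
by apply/(eqOP (slice_sm hg hh) sone_s) => z Dz; rewrite SO_sm // SO_one //; case: (E z Dz).
Qed.


Lemma slice_N f : slice f -> slice (N mul u cj D f).
Proof. by move=> hf; exact: (slice_sm hf (slice_sc hf)). Qed.
Lemma SO_N f : slice f -> forall z, D z -> SO (N mul u cj D f) z = m (SO f z) (ci (SO f z)).
Proof. by move=> hf z Dz; have := SO_sm hf (slice_sc hf) Dz; rewrite SO_sc. Qed.

Lemma main_sec (f : A -> A) (Hf : slice f) :
  let eq := eqO mul u cj D in
  let inv := is_sinv mul u cj D in
  let invb := sinvertible mul u cj D in
  let sm := smul mul u cj D in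
  let sc := sconj mul u cj D in
  let Nf := N mul u cj D in
  (invb f <-> invb (sc f)) /\
  (forall g h, inv f g -> inv (sc f) h -> eq h (sc g)) /\
  (invb f <-> (invb (Nf f) /\ invb (Nf (sc f)))) /\
  (forall g n1 n2, inv f g -> inv (Nf f) n1 -> inv (Nf (sc f)) n2 ->
     eq g (sm (sc f) n1) /\ eq g (sm n2 (sc f))) /\
  (forall g n1, inv f g -> inv (Nf f) n1 ->
     eq n1 (sm (sc g) g) /\ eq n1 (Nf (sc g))).
Proof.
cbv zeta.
have Hc := slice_sc Hf.
have slN := slice_N Hf.
have slN' := slice_N Hc.
have SON' z : D z -> SO (N mul u cj D (sconj mul u cj D f)) z = m (ci (SO f z)) (SO f z).
  by move=> Dz; rewrite SO_N // SO_sc // ci_ci.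
split.
  split.
    move=> [g /(sinvP _ Hf) [hg Eg]]; exists (sc g).
    apply/(sinvP _ Hc); split; first exact: slice_sc.
    move=> z Dz; rewrite !SO_sc //; have [g1 g2] := Eg z Dz.
    by split; apply: ci_inv.
  move=> [h /(sinvP _ Hc) [hh Eh]]; exists (sc h).
  apply/(sinvP _ Hf); split; first exact: slice_sc.
  move=> z Dz; rewrite SO_sc //; have [h1 h2] := Eh z Dz; rewrite SO_sc // in h1 h2.
  by split; rewrite -[SO f z]ci_ci; [exact: ci_inv h2 | exact: ci_inv h1].
split.
  move=> g h /(sinvP _ Hf) [hg Eg] /(sinvP _ Hc) [hh Eh].
  apply/(eqOP hh (slice_sc hg)) => z Dz; rewrite SO_sc //.
  have [g1 g2] := Eg z Dz; have [h1 h2] := Eh z Dz; rewrite SO_sc // in h1 h2.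
  exact: (invB_uniq (ci_inv g2) (ci_inv g1) h1).
split.
  split.
    move=> [g /(sinvP _ Hf) [hg Eg]]; split.
      exists (sm (sc g) g); apply/(sinvP _ slN); split; first exact: slice_sm (slice_sc hg) hg.
      move=> z Dz; rewrite SO_N // SO_sm ?SO_sc //; try exact: slice_sc.
      have [g1 g2] := Eg z Dz; split.
        exact: invB_prod g1 g2 (ci_inv g2) (ci_inv g1).
      exact: invB_prod (ci_inv g1) (ci_inv g2) g2 g1.
    exists (sm g (sc g)); apply/(sinvP _ slN'); split; first exact: slice_sm hg (slice_sc hg).
    move=> z Dz; rewrite SON' // SO_sm ?SO_sc //; try exact: slice_sc.
    have [g1 g2] := Eg z Dz; split.
      exact: invB_prod (ci_inv g2) (ci_inv g1) g1 g2.
    exact: invB_prod g2 g1 (ci_inv g1) (ci_inv g2).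
  move=> [[n1 /(sinvP _ slN) [hn1 E1]] [n2 /(sinvP _ slN') [hn2 E2]]].
  exists (sm (sc f) n1); apply/(sinvP _ Hf); split; first exact: slice_sm Hc hn1.
  move=> z Dz; rewrite SO_sm // SO_sc //.
  have [a1 a2] := E1 z Dz; have [b1 b2] := E2 z Dz.
  rewrite SO_N // in a1 a2; rewrite SON' // in b1 b2.
  by case: (invB_N a1 a2 b1 b2).
split.
  move=> g n1 n2 /(sinvP _ Hf) [hg Eg] /(sinvP _ slN) [hn1 E1] /(sinvP _ slN') [hn2 E2].
  have K z : D z -> [/\ m (SO f z) (SO g z) = e, m (SO g z) (SO f z) = e &
      [/\ m (SO f z) (m (ci (SO f z)) (SO n1 z)) = e, m (m (ci (SO f z)) (SO n1 z)) (SO f z) = e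
        & m (SO n2 z) (ci (SO f z)) = m (ci (SO f z)) (SO n1 z)]].
    move=> Dz; have [g1 g2] := Eg z Dz; have [a1 a2] := E1 z Dz; have [b1 b2] := E2 z Dz.
    rewrite SO_N // in a1 a2; rewrite SON' // in b1 b2.
    by split => //; apply: invB_N.
  split.
    apply/(eqOP hg (slice_sm Hc hn1)) => z Dz; rewrite SO_sm // SO_sc //.
    have [g1 g2 [r1 _ _]] := K z Dz.
    by symmetry; apply: (invB_uniq g1 g2 r1).
  apply/(eqOP hg (slice_sm hn2 Hc)) => z Dz; rewrite SO_sm // SO_sc //.
  have [g1 g2 [r1 _ ->]] := K z Dz.
  by symmetry; apply: (invB_uniq g1 g2 r1).
move=> g n1 /(sinvP _ Hf) [hg Eg] /(sinvP _ slN) [hn1 E1].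
have K z : D z -> SO n1 z = m (ci (SO g z)) (SO g z).
  move=> Dz; have [g1 g2] := Eg z Dz; have [a1 a2] := E1 z Dz.
  rewrite SO_N // in a1 a2.
  apply: (invB_uniq _ _ a1).
    exact: invB_prod g1 g2 (ci_inv g2) (ci_inv g1).
  exact: invB_prod (ci_inv g1) (ci_inv g2) g2 g1.
split.
  apply/(eqOP hn1 (slice_sm (slice_sc hg) hg)) => z Dz.
  by rewrite SO_sm ?SO_sc ?K //; exact: slice_sc.
apply/(eqOP hn1 (slice_N (slice_sc hg))) => z Dz.
by rewrite SO_N ?SO_sc ?ci_ci ?K //; exact: slice_sc.
Qed.

End Slice.

Unset Implicit Arguments.

Theorem theorem2p1 (R : realType) (A : vectType R)
    (mul : A -> A -> A) (u : A) (cj : A -> A) (D : R * R -> Prop)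
    (HA : alt_star_alg mul u cj)
    (HS : exists J, sphereA mul u cj J)
    (HD : exists z, D z)
    (HDc : conj_inv D)
    (f : A -> A) (Hf : is_slice mul u cj D f) :
  let eq := eqO mul u cj D in
  let inv := is_sinv mul u cj D in
  let invb := sinvertible mul u cj D in
  let sm := smul mul u cj D in
  let sc := sconj mul u cj D in
  let Nf := N mul u cj D in
  (invb f <-> invb (sc f)) /\
  (forall g h, inv f g -> inv (sc f) h -> eq h (sc g)) /\
  (invb f <-> (invb (Nf f) /\ invb (Nf (sc f)))) /\
  (forall g n1 n2, inv f g -> inv (Nf f) n1 -> inv (Nf (sc f)) n2 ->
     eq g (sm (sc f) n1) /\ eq g (sm n2 (sc f))) /\
  (forall g n1, inv f g -> inv (Nf f) n1 ->
     eq n1 (sm (sc g) g) /\ eq n1 (Nf (sc g))).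
Proof.
exact: (main_sec HA HS Hf).
Qed.
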